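(* With $H(\alpha):=H(\theta(\alpha))$ and $R(\alpha):=\sum_{i=1}^N\overline\theta_i(\alpha)\frac{\beta_i^2}{2}$: (1) $H(1)=-\sum_{i,j}\pi_iP_{ij}\log P_{ij}$ and $R(1)=\sum_{i=1}^N\pi_i\frac{\beta_i^2}{2}$; (2) $H(0)=\log\rho_0$; (3) the function $\alpha\mapsto H(\alpha)-\alpha^2R(\alpha)$ is non-increasing on $[0,1]$.
   Context: $V=\{1,\dots,N\}$; $P$ row-stochastic irreducible aperiodic with stationary distribution $\pi>0$; $\beta\in\mathbb R^N$; $\rho_0$ is the spectral radius of the 0-1 matrix $P_0$ with $(P_0)_{ij}=1$ iff $P_{ij}>0$. For $\alpha\in\mathbb R$ define $M(\alpha)\in\mathbb R^{N\times N}$ by $[M(\alpha)]_{ij}=P_{ij}^\alpha e^{-\alpha(1-\alpha)\beta_i^2/2}$ if $P_{ij}>0$ and $[M(\alpha)]_{ij}=0$ if $P_{ij}=0$ (so $M(0)=P_0$). Let $\lambda(\alpha)$ be the Perron root (spectral radius) of $M(\alpha)$ and $v(\alpha)>0$ a right Perron eigenvector. Let $Q(\alpha)_{ij}=\frac{[M(\alpha)]_{ij}v_j(\alpha)}{\lambda(\alpha)v_i(\alpha)}$ (a stochastic, irreducible, aperiodic matrix), $\overline\theta(\alpha)$ its stationary distribution, and $\theta(\alpha)_{ij}=\overline\theta_i(\alpha)Q(\alpha)_{ij}$. $H(\theta)=-\sum_{i,j}\theta_{ij}\log(\theta_{ij}/\overline\theta_i)$ with $\overline\theta=\theta\mathbf1$,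 $0\log0=0$. *)

(* Defs.v *)
From Stdlib Require Import Reals Lra Lia Arith.
Open Scope R_scope.

(* Vectors/matrices indexed by nat; only indices 0..N-1 are relevant. *)

Fixpoint rsum (n : nat) (f : nat -> R) : R :=
  match n with
  | O => 0
  | S m => rsum m f + f m
  end.

Definition mmul (N : nat) (A B : nat -> nat -> R) : nat -> nat -> R :=
  fun i j => rsum N (fun k => A i k * B k j).

Definition mid : nat -> nat -> R := fun i j => if Nat.eq_dec i j then 1 else 0.

Fixpoint mpow (N : nat) (A : nat -> nat -> R) (k : nat) : nat -> nat -> R :=
  match k with
  | O => mid
  | S m => mmul N (mpow N A m) A
  end.

Definition row_stochastic (N : nat) (P : nat -> nat -> R) : Prop :=
  (forall i j, (i < N)%nat -> (j < N)%nat -> 0 <= P i j) /\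
  (forall i, (i < N)%nat -> rsum N (fun j => P i j) = 1).

Definition irreducible (N : nat) (P : nat -> nat -> R) : Prop :=
  forall i j, (i < N)%nat -> (j < N)%nat -> exists k : nat, 0 < mpow N P k i j.

Definition aperiodic (N : nat) (P : nat -> nat -> R) : Prop :=
  forall i, (i < N)%nat ->
    forall d : nat,
      (forall k : nat, (1 <= k)%nat -> 0 < mpow N P k i i -> Nat.divide d k) ->
      d = 1%nat.

Definition stationary (N : nat) (P : nat -> nat -> R) (p : nat -> R) : Prop :=
  (forall i, (i < N)%nat -> 0 <= p i) /\
  rsum N p = 1 /\
  (forall j, (j < N)%nat -> rsum N (fun i => p i * P i j) = p j).

(* (a,b) = a + i b is a complex eigenvalue of the real matrix A, with a
   nonzero complex eigenvector x + i y *)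
Definition complex_eigenvalue (N : nat) (A : nat -> nat -> R) (a b : R) : Prop :=
  exists x y : nat -> R,
    (exists i, (i < N)%nat /\ (x i <> 0 \/ y i <> 0)) /\
    (forall i, (i < N)%nat ->
       rsum N (fun j => A i j * x j) = a * x i - b * y i /\
       rsum N (fun j => A i j * y j) = b * x i + a * y i).

Definition spectral_radius (N : nat) (A : nat -> nat -> R) (r : R) : Prop :=
  (exists a b, complex_eigenvalue N A a b /\ sqrt (a * a + b * b) = r) /\
  (forall a b, complex_eigenvalue N A a b -> sqrt (a * a + b * b) <= r).

Definition P0 (P : nat -> nat -> R) : nat -> nat -> R :=
  fun i j => if Rlt_dec 0 (P i j) then 1 else 0.

Definition Mmat (P : nat -> nat -> R) (beta : nat -> R) (alpha : R) : nat -> nat -> R :=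
  fun i j => if Rlt_dec 0 (P i j)
             then Rpower (P i j) alpha * exp (- alpha * (1 - alpha) * (beta i)^2 / 2)
             else 0.

Definition Qmat (P : nat -> nat -> R) (beta : nat -> R) (alpha lam : R) (v : nat -> R)
  : nat -> nat -> R :=
  fun i j => Mmat P beta alpha i j * v j / (lam * v i).

Definition theta (P : nat -> nat -> R) (beta : nat -> R) (alpha lam : R) (v thbar : nat -> R)
  : nat -> nat -> R :=
  fun i j => thbar i * Qmat P beta alpha lam v i j.

Definition xlog (a b : R) : R := if Req_EM_T a 0 then 0 else a * ln (a / b).

Definition Hent (N : nat) (th : nat -> nat -> R) : R :=
  - rsum N (fun i => rsum N (fun j => xlog (th i j) (rsum N (fun k => th i k)))).

Definition xlnx (x : R) : R := if Req_EM_T x 0 then 0 else x * ln x.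

(* Main.v *)
Require Import Defs.
From Stdlib Require Import Reals Lra Lia Arith FunctionalExtensionality.
Open Scope R_scope.

Lemma rsum_ext n f g : (forall i, (i < n)%nat -> f i = g i) -> rsum n f = rsum n g.
Proof. induction n; simpl; intros H; auto. rewrite IHn by (intros; apply H; lia). rewrite H by lia. auto. Qed.

Lemma rsum_plus n f g : rsum n (fun i => f i + g i) = rsum n f + rsum n g.
Proof. induction n; simpl; [ring|rewrite IHn; ring]. Qed.

Lemma rsum_minus n f g : rsum n (fun i => f i - g i) = rsum n f - rsum n g.
Proof. induction n; simpl; [ring|rewrite IHn; ring]. Qed.

Lemma rsum_scal n c f : rsum n (fun i => c * f i) = c * rsum n f.
Proof. induction n; simpl; [ring|rewrite IHn; ring]. Qed.

Lemma rsum_scalr n c f : rsum n (fun i => f i * c) = rsum n f * c.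
Proof. induction n; simpl; [ring|rewrite IHn; ring]. Qed.

Lemma rsum_opp n f : rsum n (fun i => - f i) = - rsum n f.
Proof. induction n; simpl; [ring|rewrite IHn; ring]. Qed.

Lemma rsum_le n f g : (forall i, (i < n)%nat -> f i <= g i) -> rsum n f <= rsum n g.
Proof. induction n; simpl; intros H; [lra|]. assert (f n <= g n) by (apply H; lia).
 assert (rsum n f <= rsum n g) by (apply IHn; intros; apply H; lia). lra. Qed.

Lemma rsum_nonneg n f : (forall i, (i < n)%nat -> 0 <= f i) -> 0 <= rsum n f.
Proof. intros H. replace 0 with (rsum n (fun _ => 0)). apply rsum_le; auto.
 clear H; induction n; simpl; auto; rewrite IHn; ring. Qed.

Lemma rsum_zero n f : (forall i, (i < n)%nat -> 0 <= f i) -> rsum n f = 0 ->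
  forall i, (i < n)%nat -> f i = 0.
Proof. induction n; simpl; intros H Hs i Hi; [lia|].
 assert (0 <= rsum n f) by (apply rsum_nonneg; intros; apply H; lia).
 assert (0 <= f n) by (apply H; lia).
 destruct (Nat.eq_dec i n). subst; lra. apply IHn; [intros; apply H; lia|lra|lia]. Qed.

Lemma rsum_pos_ex n f : 0 < rsum n f -> exists i, (i < n)%nat /\ 0 < f i.
Proof. induction n; simpl; intros H; [lra|].
 destruct (Rlt_dec 0 (f n)). exists n; split; auto; lia.
 destruct IHn as [i [Hi Hf]]. lra. exists i; split; auto; lia. Qed.

Lemma rsum_term_le n f i : (forall k, (k < n)%nat -> 0 <= f k) -> (i < n)%nat -> f i <= rsum n f.
Proof. induction n; simpl; intros H Hi; [lia|].
 assert (0 <= rsum n f) by (apply rsum_nonneg; intros; apply H; lia).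
 destruct (Nat.eq_dec i n). subst; lra.
 assert (f i <= rsum n f) by (apply IHn; [intros; apply H; lia|lia]).
 assert (0 <= f n) by (apply H; lia). lra. Qed.

Lemma rsum_swap n m f : rsum n (fun i => rsum m (fun j => f i j)) = rsum m (fun j => rsum n (fun i => f i j)).
Proof. induction n; simpl. induction m; simpl; auto. rewrite <- IHm; ring.
 rewrite IHn. rewrite <- rsum_plus. auto. Qed.

Lemma argmin n f : (0 < n)%nat -> exists k, (k < n)%nat /\ forall i, (i < n)%nat -> f k <= f i.
Proof. induction n; intros Hn; [lia|]. destruct n.
 exists 0%nat; split; [lia|]; intros i Hi; replace i with 0%nat by lia; lra.
 destruct IHn as [k [Hk Hm]]; [lia|].
 destruct (Rle_dec (f k) (f (S n))).
 exists k; split; [lia|]. intros i Hi. destruct (Nat.eq_dec i (S n)); [subst; auto|apply Hm; lia].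
 exists (S n); split; [lia|]. intros i Hi. destruct (Nat.eq_dec i (S n)); [subst; lra|].
 assert (f k <= f i) by (apply Hm; lia). lra. Qed.

Lemma argmax n f : (0 < n)%nat -> exists k, (k < n)%nat /\ forall i, (i < n)%nat -> f i <= f k.
Proof. intros Hn. destruct (argmin n (fun i => - f i) Hn) as [k [Hk Hm]].
 exists k; split; auto; intros i Hi; specialize (Hm i Hi); lra. Qed.

Lemma ln_le_sub1 x : 0 < x -> ln x <= x - 1.
Proof. intros Hx. pose proof (exp_ineq1_le (ln x)). rewrite exp_ln in H by auto. lra. Qed.

Lemma ln_div' x y : 0 < x -> 0 < y -> ln (x / y) = ln x - ln y.
Proof. intros. unfold Rdiv. rewrite ln_mult by (auto; apply Rinv_0_lt_compat; auto). rewrite ln_Rinv by auto. ring. Qed.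

Lemma mpow_fwd N P (S : nat -> Prop) :
  (forall i j, (i < N)%nat -> (j < N)%nat -> 0 <= P i j) ->
  (forall i j, (i < N)%nat -> (j < N)%nat -> 0 < P i j -> S i -> S j) ->
  forall k i j, (i < N)%nat -> (j < N)%nat -> 0 < mpow N P k i j -> S i -> S j.
Proof. intros Hnn Hcl k. induction k; intros i j Hi Hj Hp Si; simpl in Hp.
 - unfold mid in Hp. destruct (Nat.eq_dec i j); [subst; auto|lra].
 - unfold mmul in Hp. apply rsum_pos_ex in Hp. destruct Hp as [l [Hl Ht]].
   assert (0 <= P l j) by auto.
   assert (0 < P l j) by (destruct H; auto; rewrite <- H in Ht; lra).
   assert (0 < mpow N P k i l) by (destruct (Rlt_dec 0 (mpow N P k i l)); auto; nra).
   apply (Hcl l j); auto. apply (IHk i l); auto. Qed.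

Lemma mpow_bwd N P (S : nat -> Prop) :
  (forall i j, (i < N)%nat -> (j < N)%nat -> 0 <= P i j) ->
  (forall i j, (i < N)%nat -> (j < N)%nat -> 0 < P i j -> S j -> S i) ->
  forall k i j, (i < N)%nat -> (j < N)%nat -> 0 < mpow N P k i j -> S j -> S i.
Proof. intros Hnn Hcl k. induction k; intros i j Hi Hj Hp Sj; simpl in Hp.
 - unfold mid in Hp. destruct (Nat.eq_dec i j); [subst; auto|lra].
 - unfold mmul in Hp. apply rsum_pos_ex in Hp. destruct Hp as [l [Hl Ht]].
   assert (0 <= P l j) by auto.
   assert (0 < P l j) by (destruct H; auto; rewrite <- H in Ht; lra).
   assert (0 < mpow N P k i l) by (destruct (Rlt_dec 0 (mpow N P k i l)); auto; nra).
   apply (IHk i l); auto. apply (Hcl l j); auto. Qed.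

Lemma Rpower_pos x y : 0 < Rpower x y.
Proof. unfold Rpower; apply exp_pos. Qed.

Lemma Mmat_nonneg P b a i j : 0 <= Mmat P b a i j.
Proof. unfold Mmat. destruct (Rlt_dec 0 (P i j)); [|lra].
 pose proof (Rpower_pos (P i j) a). pose proof (exp_pos (- a * (1 - a) * b i ^ 2 / 2)). nra. Qed.

Lemma Mmat_pos P b a i j : 0 < P i j -> 0 < Mmat P b a i j.
Proof. unfold Mmat. destruct (Rlt_dec 0 (P i j)); [|lra]. intros _.
 pose proof (Rpower_pos (P i j) a). pose proof (exp_pos (- a * (1 - a) * b i ^ 2 / 2)). nra. Qed.

Lemma Mmat_nz P b a i j : Mmat P b a i j <> 0 -> 0 < P i j.
Proof. unfold Mmat. destruct (Rlt_dec 0 (P i j)); auto. lra. Qed.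

Lemma Mmat_ln P b a i j : 0 < P i j -> ln (Mmat P b a i j) = a * ln (P i j) - a * (1 - a) * (b i ^ 2 / 2).
Proof. unfold Mmat. destruct (Rlt_dec 0 (P i j)); [|lra]. intros _.
 rewrite ln_mult by (apply Rpower_pos || apply exp_pos). unfold Rpower. rewrite !ln_exp. field. Qed.

Lemma Qrow N P b a lam v i : (i < N)%nat -> 0 < lam -> 0 < v i ->
  rsum N (fun j => Mmat P b a i j * v j) = lam * v i ->
  rsum N (fun j => Qmat P b a lam v i j) = 1.
Proof. intros Hi Hl Hv H. unfold Qmat.
 transitivity (rsum N (fun j => Mmat P b a i j * v j) * / (lam * v i)).
 rewrite <- rsum_scalr. apply rsum_ext; intros; unfold Rdiv; ring.
 rewrite H. field. split; lra. Qed.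

Lemma Q_nonneg P b a lam v i j : 0 < lam -> 0 < v i -> 0 < v j -> 0 <= Qmat P b a lam v i j.
Proof. intros. unfold Qmat. pose proof (Mmat_nonneg P b a i j).
 apply Rmult_le_pos. nra. left; apply Rinv_0_lt_compat; nra. Qed.

Lemma Q_pos P b a lam v i j : 0 < lam -> 0 < v i -> 0 < v j -> 0 < P i j -> 0 < Qmat P b a lam v i j.
Proof. intros. unfold Qmat. pose proof (Mmat_pos P b a i j H2).
 apply Rmult_lt_0_compat. nra. apply Rinv_0_lt_compat; nra. Qed.

Lemma logQ_sum N P b a lam v th :
  (forall i, (i < N)%nat -> 0 < v i) -> 0 < lam ->
  (forall i j, (i < N)%nat -> (j < N)%nat -> 0 <= th i j) ->
  (forall i j, (i < N)%nat -> (j < N)%nat -> 0 < th i j -> 0 < P i j) ->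
  (forall j, (j < N)%nat -> rsum N (fun i => th i j) = rsum N (fun k => th j k)) ->
  rsum N (fun i => rsum N (fun j => th i j)) = 1 ->
  rsum N (fun i => rsum N (fun j => th i j * ln (Qmat P b a lam v i j))) =
  rsum N (fun i => rsum N (fun j => th i j * ln (Mmat P b a i j))) - ln lam.
Proof. intros Hv Hl Hnn Hsupp Hcol Htot.
 transitivity (rsum N (fun i => rsum N (fun j => th i j * ln (Mmat P b a i j))
   + rsum N (fun j => th i j * ln (v j)) - rsum N (fun j => th i j) * ln (v i)
   - rsum N (fun j => th i j) * ln lam)).
 { apply rsum_ext; intros i Hi. rewrite <- !rsum_scalr, <- rsum_plus, <- !rsum_minus.
   apply rsum_ext; intros j Hj. destruct (Req_EM_T (th i j) 0) as [e|ne].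
   - rewrite e; ring.
   - assert (0 < th i j) by (destruct (Hnn i j Hi Hj); auto; congruence).
     assert (0 < P i j) by auto. pose proof (Mmat_pos P b a i j H0).
     pose proof (Hv i Hi). pose proof (Hv j Hj).
     unfold Qmat. rewrite ln_div' by nra. rewrite !ln_mult by nra. ring. }
 rewrite !rsum_minus, rsum_plus, rsum_scalr, Htot.
 rewrite (rsum_swap N N (fun i j => th i j * ln (v j))).
 replace (rsum N (fun j => rsum N (fun i => th i j * ln (v j)))) with
   (rsum N (fun i => rsum N (fun j => th i j) * ln (v i))). ring.
 apply rsum_ext; intros j Hj. rewrite rsum_scalr, Hcol; auto. Qed.

Lemma Hent_le N P b a lam v th :
  (forall i, (i < N)%nat -> 0 < v i) -> 0 < lam ->
  (forall i, (i < N)%nat -> rsum N (fun j => Mmat P b a i j * v j) = lam * v i) ->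
  (forall i j, (i < N)%nat -> (j < N)%nat -> 0 <= th i j) ->
  (forall i j, (i < N)%nat -> (j < N)%nat -> 0 < th i j -> 0 < P i j) ->
  Hent N th + rsum N (fun i => rsum N (fun j => th i j * ln (Qmat P b a lam v i j))) <= 0.
Proof. intros Hv Hl HMv Hnn Hsupp. unfold Hent.
 rewrite <- rsum_opp, <- rsum_plus.
 apply Rle_trans with (rsum N (fun i => rsum N (fun k => th i k) * rsum N (fun j => Qmat P b a lam v i j) - rsum N (fun k => th i k))).
 2:{ right. replace 0 with (rsum N (fun _ => 0)) by (clear; induction N; simpl; auto; rewrite IHN; ring).
     apply rsum_ext; intros i Hi. rewrite (Qrow N P b a lam v i Hi Hl (Hv i Hi) (HMv i Hi)). ring. }
 apply rsum_le; intros i Hi. rewrite <- rsum_opp, <- rsum_plus, <- rsum_scal, <- rsum_minus.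
 apply rsum_le; intros j Hj.
 set (r := rsum N (fun k => th i k)).
 assert (Hr : th i j <= r) by (apply rsum_term_le; auto).
 pose proof (Hv i Hi). pose proof (Hv j Hj).
 destruct (Req_EM_T (th i j) 0) as [e|ne].
 - unfold xlog. rewrite e. destruct (Req_EM_T 0 0); [|congruence].
   pose proof (Q_nonneg P b a lam v i j Hl H H0). rewrite e in Hr. assert (0 <= r * Qmat P b a lam v i j) by (apply Rmult_le_pos; lra). lra.
 - assert (0 < th i j) by (destruct (Hnn i j Hi Hj); auto; congruence).
   assert (0 < P i j) by auto.
   pose proof (Q_pos P b a lam v i j Hl H H0 H2).
   set (Q := Qmat P b a lam v i j) in *. set (t := th i j) in *.
   unfold xlog. destruct (Req_EM_T t 0); [congruence|].
   assert (Hlq := ln_le_sub1 (Q * r / t)).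
   rewrite ln_div', ln_mult in Hlq by nra. rewrite ln_div' by nra.
   assert (Hqr : 0 < Q * r / t) by (apply Rdiv_lt_0_compat; nra). specialize (Hlq Hqr).
   assert (t * (ln Q + ln r - ln t) <= t * (Q * r / t - 1)) by (apply Rmult_le_compat_l; lra).
   replace (t * (Q * r / t - 1)) with (r * Q - t) in H4 by (field; lra). nra. Qed.

Lemma theta_row N P b a lam v tb i : (i < N)%nat -> 0 < lam -> 0 < v i ->
  rsum N (fun j => Mmat P b a i j * v j) = lam * v i ->
  rsum N (fun k => theta P b a lam v tb i k) = tb i.
Proof. intros. unfold theta. rewrite rsum_scal. transitivity (tb i * 1); [f_equal; apply (Qrow N P b a lam v i); auto | ring]. Qed.

Lemma Hent_theta N P b a lam v tb :
  (forall i, (i < N)%nat -> 0 < v i) -> 0 < lam ->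
  (forall i, (i < N)%nat -> rsum N (fun j => Mmat P b a i j * v j) = lam * v i) ->
  (forall i, (i < N)%nat -> 0 <= tb i) ->
  Hent N (theta P b a lam v tb) + rsum N (fun i => rsum N (fun j => theta P b a lam v tb i j * ln (Qmat P b a lam v i j))) = 0.
Proof. intros Hv Hl HMv Htb. unfold Hent.
 rewrite <- rsum_opp, <- rsum_plus.
 replace 0 with (rsum N (fun _ => 0)) by (clear; induction N; simpl; auto; rewrite IHN; ring).
 apply rsum_ext; intros i Hi. rewrite (theta_row N P b a lam v tb i); auto.
 rewrite <- rsum_opp, <- rsum_plus.
 replace 0 with (rsum N (fun _ => 0)) by (clear; induction N; simpl; auto; rewrite IHN; ring).
 apply rsum_ext; intros j Hj. unfold xlog.
 destruct (Req_EM_T (theta P b a lam v tb i j) 0) as [e|ne].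
 - rewrite e; ring.
 - unfold theta in *. pose proof (Hv i Hi). pose proof (Hv j Hj).
   pose proof (Q_nonneg P b a lam v i j Hl H H0).
   assert (tb i <> 0) by (intro e; rewrite e in ne; apply ne; ring).
   replace (tb i * Qmat P b a lam v i j / tb i) with (Qmat P b a lam v i j) by (field; auto).
   ring. Qed.

Lemma Mdecomp N P b a th :
  (forall i j, (i < N)%nat -> (j < N)%nat -> 0 <= th i j) ->
  (forall i j, (i < N)%nat -> (j < N)%nat -> 0 < th i j -> 0 < P i j) ->
  rsum N (fun i => rsum N (fun j => th i j * ln (Mmat P b a i j))) =
  a * rsum N (fun i => rsum N (fun j => th i j * ln (P i j)))
  - a * (1 - a) * rsum N (fun i => rsum N (fun j => th i j) * (b i ^ 2 / 2)).
Proof. intros Hnn Hsupp.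
 rewrite <- !rsum_scal, <- rsum_minus. apply rsum_ext; intros i Hi.
 rewrite <- !rsum_scalr, <- !rsum_scal, <- rsum_minus. apply rsum_ext; intros j Hj.
 destruct (Req_EM_T (th i j) 0) as [e|ne]. rewrite e; ring.
 assert (0 < th i j) by (destruct (Hnn i j Hi Hj); auto; congruence).
 rewrite Mmat_ln by auto. ring. Qed.

Lemma rsum_zero_fun n : rsum n (fun _ => 0) = 0.
Proof. induction n; simpl; auto; rewrite IHn; ring. Qed.

Lemma key_le N P b a lam v th :
  (forall i, (i < N)%nat -> 0 < v i) -> 0 < lam ->
  (forall i, (i < N)%nat -> rsum N (fun j => Mmat P b a i j * v j) = lam * v i) ->
  (forall i j, (i < N)%nat -> (j < N)%nat -> 0 <= th i j) ->
  (forall i j, (i < N)%nat -> (j < N)%nat -> 0 < th i j -> 0 < P i j) ->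
  (forall j, (j < N)%nat -> rsum N (fun i => th i j) = rsum N (fun k => th j k)) ->
  rsum N (fun i => rsum N (fun j => th i j)) = 1 ->
  Hent N th + a * rsum N (fun i => rsum N (fun j => th i j * ln (P i j)))
  - a * (1 - a) * rsum N (fun i => rsum N (fun j => th i j) * (b i ^ 2 / 2)) <= ln lam.
Proof. intros Hv Hl HMv Hnn Hs Hc Ht.
 pose proof (Hent_le N P b a lam v th Hv Hl HMv Hnn Hs).
 rewrite (logQ_sum N P b a lam v th Hv Hl Hnn Hs Hc Ht) in H.
 rewrite (Mdecomp N P b a th Hnn Hs) in H. lra. Qed.

Lemma theta_facts N P b a lam v tb :
  (forall i, (i < N)%nat -> 0 < v i) -> 0 < lam ->
  (forall i, (i < N)%nat -> rsum N (fun j => Mmat P b a i j * v j) = lam * v i) ->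
  stationary N (Qmat P b a lam v) tb ->
  let th := theta P b a lam v tb in
  (forall i j, (i < N)%nat -> (j < N)%nat -> 0 <= th i j) /\
  (forall i j, (i < N)%nat -> (j < N)%nat -> 0 < th i j -> 0 < P i j) /\
  (forall j, (j < N)%nat -> rsum N (fun i => th i j) = rsum N (fun k => th j k)) /\
  rsum N (fun i => rsum N (fun j => th i j)) = 1 /\
  (forall i, (i < N)%nat -> rsum N (fun k => th i k) = tb i).
Proof. intros Hv Hl HMv [Htb [Hsum Hst]] th.
 assert (Hrow : forall i, (i < N)%nat -> rsum N (fun k => th i k) = tb i)
   by (intros; apply theta_row; auto).
 split; [|split; [|split; [|split]]]; auto.
 - intros i j Hi Hj. unfold th, theta. apply Rmult_le_pos; auto. apply Q_nonneg; auto.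
 - intros i j Hi Hj H. unfold th, theta, Qmat in H. apply (Mmat_nz P b a).
   intro e. rewrite e in H. lra.
 - intros j Hj. rewrite Hrow by auto. rewrite <- Hst by auto. apply rsum_ext; intros; reflexivity.
 - rewrite <- Hsum. apply rsum_ext; intros; auto. Qed.

Lemma key_eq N P b a lam v tb :
  (forall i, (i < N)%nat -> 0 < v i) -> 0 < lam ->
  (forall i, (i < N)%nat -> rsum N (fun j => Mmat P b a i j * v j) = lam * v i) ->
  stationary N (Qmat P b a lam v) tb ->
  Hent N (theta P b a lam v tb) + a * rsum N (fun i => rsum N (fun j => theta P b a lam v tb i j * ln (P i j)))
  - a * (1 - a) * rsum N (fun i => tb i * b i ^ 2 / 2) = ln lam.
Proof. intros Hv Hl HMv Hst.
 destruct (theta_facts N P b a lam v tb Hv Hl HMv Hst) as [Hnn [Hs [Hc [Ht Hr]]]].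
 pose proof (Hent_theta N P b a lam v tb Hv Hl HMv (proj1 Hst)).
 rewrite (logQ_sum N P b a lam v _ Hv Hl Hnn Hs Hc Ht) in H.
 rewrite (Mdecomp N P b a _ Hnn Hs) in H.
 replace (rsum N (fun i => tb i * b i ^ 2 / 2)) with
   (rsum N (fun i => rsum N (fun j => theta P b a lam v tb i j) * (b i ^ 2 / 2))). lra.
 apply rsum_ext; intros i Hi. rewrite Hr by auto. field. Qed.

Lemma alg a b Ha Hb La Lb Ra Rb la lb : 0 <= a -> a < b -> b <= 1 -> 0 <= Ra -> 0 <= Rb ->
  Ha + a * La - a * (1 - a) * Ra = la -> Hb + b * Lb - b * (1 - b) * Rb = lb ->
  Hb + a * Lb - a * (1 - a) * Rb <= la -> Ha + b * La - b * (1 - b) * Ra <= lb ->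
  Hb - b ^ 2 * Rb <= Ha - a ^ 2 * Ra.
Proof. intros.
 assert (b * (Hb + a * Lb - a * (1 - a) * Rb) <= b * (Ha + a * La - a * (1 - a) * Ra)) by (apply Rmult_le_compat_l; lra).
 assert (a * (Ha + b * La - b * (1 - b) * Ra) <= a * (Hb + b * Lb - b * (1 - b) * Rb)) by (apply Rmult_le_compat_l; lra).
 assert ((b - a) * (Hb - Ha - a * b * (Rb - Ra)) <= 0) by lra.
 assert (Hb - Ha - a * b * (Rb - Ra) <= 0).
 { destruct (Rle_dec (Hb - Ha - a * b * (Rb - Ra)) 0); auto.
   assert (0 < (b - a) * (Hb - Ha - a * b * (Rb - Ra))) by (apply Rmult_lt_0_compat; lra). lra. }
 assert (0 <= (b - a) * (b * Rb + a * Ra)) by (apply Rmult_le_pos; nra). nra. Qed.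

Lemma stat_unique N P mu nu :
  (forall i j, (i < N)%nat -> (j < N)%nat -> 0 <= P i j) -> irreducible N P ->
  rsum N mu = 1 -> (forall j, (j < N)%nat -> rsum N (fun i => mu i * P i j) = mu j) ->
  rsum N nu = 1 -> (forall j, (j < N)%nat -> rsum N (fun i => nu i * P i j) = nu j) ->
  (forall i, (i < N)%nat -> 0 < nu i) ->
  forall i, (i < N)%nat -> mu i = nu i.
Proof. intros Hnn Hirr Hmu Hmus Hnu Hnus Hpos.
 assert (HN : (0 < N)%nat) by (destruct N; simpl in Hmu; [lra|lia]).
 destruct (argmin N (fun i => mu i / nu i) HN) as [k [Hk Hm]].
 set (c := mu k / nu k) in *.
 set (w := fun i => mu i - c * nu i).
 assert (Hw : forall i, (i < N)%nat -> 0 <= w i).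
 { intros i Hi. specialize (Hm i Hi). pose proof (Hpos i Hi). unfold w.
   assert (c * nu i <= mu i / nu i * nu i) by (apply Rmult_le_compat_r; lra).
   replace (mu i / nu i * nu i) with (mu i) in H0 by (field; lra). lra. }
 assert (Hwk : w k = 0) by (unfold w, c; pose proof (Hpos k Hk); field; lra).
 assert (Hws : forall j, (j < N)%nat -> rsum N (fun i => w i * P i j) = w j).
 { intros j Hj. unfold w. rewrite <- Hmus, <- Hnus by auto. rewrite <- rsum_scal, <- rsum_minus.
   apply rsum_ext; intros; ring. }
 assert (Hall : forall i, (i < N)%nat -> w i = 0).
 { intros i Hi. destruct (Hirr i k Hi Hk) as [kk Hkk].
   apply (mpow_bwd N P (fun i => w i = 0) Hnn) with (k := kk) (j := k); auto.
   intros i' j' Hi' Hj' Hp Hw'. rewrite <- Hws in Hw' by auto.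
   pose proof (rsum_zero N _ (fun l Hl => Rmult_le_pos _ _ (Hw l Hl) (Hnn l j' Hl Hj')) Hw' i' Hi').
   simpl in H. nra. }
 assert (c = 1).
 { assert (rsum N mu = c * rsum N nu).
   { rewrite <- rsum_scal. apply rsum_ext; intros i Hi. specialize (Hall i Hi). unfold w in Hall. lra. }
   rewrite Hmu, Hnu in H; lra. }
 intros i Hi. specialize (Hall i Hi). unfold w in Hall. rewrite H in Hall. lra. Qed.

Lemma spec_unique N A r r' : spectral_radius N A r -> spectral_radius N A r' -> r = r'.
Proof. intros [[a [b [Hc Hs]]] Hle] [[a' [b' [Hc' Hs']]] Hle'].
 specialize (Hle' a b Hc). specialize (Hle a' b' Hc'). lra. Qed.

Lemma lam_pos N P b a lam v : (0 < N)%nat -> row_stochastic N P ->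
  (forall i, (i < N)%nat -> 0 < v i) ->
  (forall i, (i < N)%nat -> rsum N (fun j => Mmat P b a i j * v j) = lam * v i) -> 0 < lam.
Proof. intros HN [Hnn Hrow] Hv HMv.
 assert (0 < rsum N (fun j => P 0%nat j)) by (rewrite Hrow; auto; lra).
 destruct (rsum_pos_ex _ _ H) as [j [Hj Hp]].
 assert (0 < Mmat P b a 0 j * v j) by (apply Rmult_lt_0_compat; [apply Mmat_pos|apply Hv]; auto).
 assert (Mmat P b a 0 j * v j <= rsum N (fun j => Mmat P b a 0 j * v j)).
 { apply (rsum_term_le N (fun j => Mmat P b a 0 j * v j)); auto. intros; apply Rmult_le_pos.
   apply Mmat_nonneg. left; auto. }
 rewrite HMv in H1 by auto. pose proof (Hv 0%nat HN). nra. Qed.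

Lemma M1 P b i j : 0 <= P i j -> Mmat P b 1 i j = P i j.
Proof. intros H. unfold Mmat. destruct (Rlt_dec 0 (P i j)).
 rewrite Rpower_1 by auto. match goal with |- context [exp ?e] => replace e with 0 by field end. rewrite exp_0; ring.
 lra. Qed.

Lemma M0 P b : Mmat P b 0 = P0 P.
Proof. apply functional_extensionality; intro i; apply functional_extensionality; intro j.
 unfold Mmat, P0. destruct (Rlt_dec 0 (P i j)); auto.
 rewrite Rpower_O by auto. match goal with |- context [exp ?e] => replace e with 0 by field end. rewrite exp_0; ring. Qed.

Theorem lemma11 (N : nat) (P : nat -> nat -> R) (pi beta : nat -> R) (rho0 : R)
  (lam : R -> R) (v thbar : R -> nat -> R)
  (HP : row_stochastic N P) (Hirr : irreducible N P) (Hap : aperiodic N P)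
  (Hpi : stationary N P pi) (Hpipos : forall i, (i < N)%nat -> 0 < pi i)
  (Hrho0 : spectral_radius N (P0 P) rho0)
  (Hlam : forall alpha, 0 <= alpha <= 1 ->
            spectral_radius N (Mmat P beta alpha) (lam alpha))
  (Hv : forall alpha, 0 <= alpha <= 1 ->
          (forall i, (i < N)%nat -> 0 < v alpha i) /\
          (forall i, (i < N)%nat ->
             rsum N (fun j => Mmat P beta alpha i j * v alpha j) = lam alpha * v alpha i))
  (Hth : forall alpha, 0 <= alpha <= 1 ->
           stationary N (Qmat P beta alpha (lam alpha) (v alpha)) (thbar alpha)) :
  let Hf := fun alpha => Hent N (theta P beta alpha (lam alpha) (v alpha) (thbar alpha)) in
  let Rf := fun alpha => rsum N (fun i => thbar alpha i * (beta i)^2 / 2) in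
  (Hf 1 = - rsum N (fun i => rsum N (fun j => pi i * xlnx (P i j))) /\
   Rf 1 = rsum N (fun i => pi i * (beta i)^2 / 2)) /\
  Hf 0 = ln rho0 /\
  (forall a b, 0 <= a -> a <= b -> b <= 1 ->
     Hf b - b^2 * Rf b <= Hf a - a^2 * Rf a).
Proof.
 cbv zeta.
 assert (HN : (0 < N)%nat) by (destruct Hpi as [_ [Hs _]]; destruct N; simpl in Hs; [lra|lia]).
 pose proof HP as [Pnn Prow].
 set (th := fun a => theta P beta a (lam a) (v a) (thbar a)).
 set (L := fun a => rsum N (fun i => rsum N (fun j => th a i j * ln (P i j)))).
 set (Rf := fun a => rsum N (fun i => thbar a i * (beta i)^2 / 2)).
 change (fun alpha => Hent N (theta P beta alpha (lam alpha) (v alpha) (thbar alpha))) with (fun a => Hent N (th a)).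
 change (fun alpha => rsum N (fun i => thbar alpha i * (beta i)^2 / 2)) with Rf.
 cbv beta.
 assert (Hlpos : forall a, 0 <= a <= 1 -> 0 < lam a).
 { intros a Ha. destruct (Hv a Ha). apply (lam_pos N P beta a (lam a) (v a)); auto. }
 assert (Heq : forall a, 0 <= a <= 1 -> Hent N (th a) + a * L a - a * (1 - a) * Rf a = ln (lam a)).
 { intros a Ha. destruct (Hv a Ha). apply key_eq; auto. }
 assert (Hineq : forall a g, 0 <= a <= 1 -> 0 <= g <= 1 ->
     Hent N (th g) + a * L g - a * (1 - a) * Rf g <= ln (lam a)).
 { intros a g Ha Hg. destruct (Hv a Ha) as [Hva HMa]. destruct (Hv g Hg) as [Hvg HMg].
   destruct (theta_facts N P beta g (lam g) (v g) (thbar g) Hvg (Hlpos g Hg) HMg (Hth g Hg))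
     as [Hnn [Hs [Hc [Ht Hr]]]].
   pose proof (key_le N P beta a (lam a) (v a) (th g) Hva (Hlpos a Ha) HMa Hnn Hs Hc Ht).
   replace (Rf g) with (rsum N (fun i => rsum N (fun j => th g i j) * (beta i ^ 2 / 2))). exact H.
   unfold Rf. apply rsum_ext; intros i Hi. unfold th. rewrite Hr by auto. field. }
 assert (HR : forall a, 0 <= a <= 1 -> 0 <= Rf a).
 { intros a Ha. destruct (Hth a Ha) as [Htb _]. unfold Rf. apply rsum_nonneg; intros i Hi.
   pose proof (Htb i Hi). pose proof (pow2_ge_0 (beta i)). apply Rmult_le_pos; [nra|lra]. }
 split; [|split].
 -
   assert (H1 : 0 <= 1 <= 1) by lra.
   destruct (Hv 1 H1) as [Hv1 HMv1].
   assert (HPv : forall i, (i < N)%nat -> rsum N (fun j => P i j * v 1 j) = lam 1 * v 1 i).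
   { intros i Hi. rewrite <- HMv1 by auto. apply rsum_ext; intros j Hj. rewrite M1; auto. }
   destruct (argmax N (v 1) HN) as [k [Hk Hmax]].
   destruct (argmin N (v 1) HN) as [m [Hm Hmin]].
   assert (Hl1 : lam 1 = 1).
   { assert (lam 1 * v 1 k <= v 1 k).
     { rewrite <- HPv by auto. replace (v 1 k) with (rsum N (fun j => P k j) * v 1 k)
         by (rewrite Prow; auto; ring).
       rewrite <- rsum_scalr. apply rsum_le; intros j Hj. apply Rmult_le_compat_l; auto. }
     assert (v 1 m <= lam 1 * v 1 m).
     { rewrite <- HPv by auto. replace (v 1 m) with (rsum N (fun j => P m j) * v 1 m)
         by (rewrite Prow; auto; ring).
       rewrite <- rsum_scalr. apply rsum_le; intros j Hj. apply Rmult_le_compat_l; auto. }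
     pose proof (Hv1 k Hk). pose proof (Hv1 m Hm). nra. }
   assert (Hvc : forall i, (i < N)%nat -> v 1 i = v 1 k).
   { intros i Hi. destruct (Hirr k i Hk Hi) as [kk Hkk].
     apply (mpow_fwd N P (fun i => v 1 i = v 1 k) Pnn) with (k := kk) (i := k); auto.
     intros i' j' Hi' Hj' Hp Hsi.
     assert (rsum N (fun l => P i' l * (v 1 k - v 1 l)) = 0).
     { transitivity (v 1 k * rsum N (fun l => P i' l) - rsum N (fun l => P i' l * v 1 l)).
       rewrite <- rsum_scal, <- rsum_minus. apply rsum_ext; intros; ring.
       rewrite Prow, HPv, Hl1, Hsi by auto. ring. }
     assert (forall l, (l < N)%nat -> 0 <= P i' l * (v 1 k - v 1 l)).
     { intros l Hl. apply Rmult_le_pos; auto. specialize (Hmax l Hl). lra. }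
     pose proof (rsum_zero N _ H0 H j' Hj'). simpl in H2.
     destruct (Rmult_integral _ _ H2); lra. }
   assert (HQ : forall i j, (i < N)%nat -> (j < N)%nat -> Qmat P beta 1 (lam 1) (v 1) i j = P i j).
   { intros i j Hi Hj. unfold Qmat. rewrite M1, Hl1, (Hvc i), (Hvc j) by auto.
     pose proof (Hv1 k Hk). field. lra. }
   destruct (Hth 1 H1) as [Htbnn [Htbs Htbst]].
   assert (Htbst' : forall j, (j < N)%nat -> rsum N (fun i => thbar 1 i * P i j) = thbar 1 j).
   { intros j Hj. rewrite <- Htbst by auto. apply rsum_ext; intros i Hi. rewrite HQ; auto. }
   destruct Hpi as [Hpinn [Hpis Hpist]].
   pose proof (stat_unique N P (thbar 1) pi Pnn Hirr Htbs Htbst' Hpis Hpist Hpipos) as Htp.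
   split.
   + pose proof (Heq 1 H1). rewrite Hl1, ln_1 in H.
     assert (L 1 = rsum N (fun i => rsum N (fun j => pi i * xlnx (P i j)))).
     { unfold L. apply rsum_ext; intros i Hi. apply rsum_ext; intros j Hj.
       unfold th, theta. rewrite HQ, Htp by auto. unfold xlnx.
       destruct (Req_EM_T (P i j) 0) as [e|e]; [rewrite e; ring|ring]. }
     change (theta P beta 1 (lam 1) (v 1) (thbar 1)) with (th 1). lra.
   + unfold Rf. apply rsum_ext; intros i Hi. rewrite Htp; auto.
 - assert (H0 : 0 <= 0 <= 1) by lra. pose proof (Heq 0 H0).
   pose proof (Hlam 0 H0). rewrite M0 in H1. rewrite (spec_unique N (P0 P) (lam 0) rho0 H1 Hrho0) in H.
   change (theta P beta 0 (lam 0) (v 0) (thbar 0)) with (th 0). lra.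
 - intros a b Ha Hab Hb1. destruct (Req_dec a b) as [e|ne]. subst; lra.
   assert (Ha' : 0 <= a <= 1) by lra. assert (Hb' : 0 <= b <= 1) by lra.
   apply (alg a b _ _ (L a) (L b) _ _ (ln (lam a)) (ln (lam b))); try lra; auto.
   apply HR; auto. apply HR; auto. apply Heq; auto. apply Heq; auto.
   apply Hineq; auto. apply Hineq; auto.
Qed.
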